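(* In a combinatorial auction as described in the context, let $(x^*,p)$ be a Walrasian equilibrium which is not a price-match equilibrium, and let $\bar\imath$ be a bidder witnessing this, i.e. there is no feasible allocation $x^{-\bar\imath}$ with $x^{-\bar\imath}_k=0$ for all $k\in\mathcal K_{\bar\imath}$, $p\,a^k\le b_k$ for all $k$ with $x^{-\bar\imath}_k=1$, and $p\bm A x^{-\bar\imath}=p\bm Ax^*$. Then for some small $\epsilon>0$, the payment vector $\bar\rho$ defined by $\bar\rho_i=p\,a^{i*}$ for $i\ne\bar\imath$ and $\bar\rho_{\bar\imath}=p\,a^{\bar\imath*}-\epsilon$ is core-selecting at $x^*$. In particular, there is a core point with strictly lower total payments than the WE payments.
   Context: Combinatorial auction (CA): item types $j\in\mathcal J=\{1,\dots,J\}$ with supply $c_j\in\mathbb Z_{\ge1}$ (supply vector $c$); bidders $\mathcal I=\{1,\dots,I\}$; a finite set of bids $\mathcal K$, each bid $k$ made by a bidder $i(k)$ and consisting of a bundle $a^k\in\mathbb Z^J_{\ge0}$, $a^k\le c$, and an amount $b_k\ge0$; $\mathcal K_i$ is the set of bids of bidder $i$; bids are taken to be truthful. $\bm A$ is the $J\times K$ matrix with columns $a^k$, $\bm B$ the $I\times K$ matrix with $\bm B_{i,k}=1$ iff $k\in\mathcal K_i$. A feasible allocation is $x\in\{0,1\}^K$ with $\bm Ax\le c$, $\bm Bx\le\bm 1$. For a set of bidders $\mathcal C$ and supply $c'$, $w(\mathcal C,c',\cdot)$ is the maximum total bid amount over feasible allocations (supply $c'$) using only bids of bidders in $\mathcal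 C$. $x^*$ is an efficient (optimal) allocation; $a^{i*}$, $b_{i*}$ are the bundle and amount of bidder $i$'s accepted bid ($\bm 0$, $0$ if none). A payment vector $\rho$ ($\rho_i=0$ for bidders with no accepted bid) is core-selecting at $x^*$ if $\rho_i\le b_{i*}$ for all $i$ and for all $\mathcal C\subseteq\mathcal I$: $\sum_{i\in\mathcal C}(b_{i*}-\rho_i)+\sum_{i\in\mathcal I}\rho_i\ge w(\mathcal C,c,\mathcal K^{\mathcal C})$, $\mathcal K^{\mathcal C}$ the bids of bidders in $\mathcal C$. A Walrasian equilibrium (WE) is $(x^*,p)$ with $x^*$ efficient, $p\in\mathbb R^J_{\ge0}$, surpluses $s_i=b_{i*}-p\,a^{i*}\ge0$, $p\,a^k+s_{i(k)}\ge b_k$ for every bid $k$, and $p_j=0$ whenever $(\bm Ax^* )_j<c_j$; payments are $p\,a^{i*}$. A WE $(x^*,p)$ is a price-match equilibrium (PME) if for every bidder $i$ there is a feasible allocation $x^{-i}$ with $x^{-i}_k=0$ for all $k\in\mathcal K_i$, $p\,a^k\le b_k$ for every $k$ with $x^{-i}_k=1$, and $p\bm Ax^{-i}=p\bm Ax^*$. (Items may include artificial items, i.e. valid cuts added as rows of $\bm A$; they are treated like any other item.) *)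

(* Defs.v *)
From HB Require Import structures.
From mathcomp Require Import all_boot all_order all_algebra.
Set Implicit Arguments. Unset Strict Implicit. Unset Printing Implicit Defensive.
Import Order.TTheory GRing.Theory Num.Theory.
Local Open Scope ring_scope.

Section Auction.
Variable R : realFieldType.
Variables (J I K : nat).
Variable c : 'I_J -> nat.
Variable owner : 'I_K -> 'I_I.
Variable a : 'I_K -> 'I_J -> nat.
Variable b : 'I_K -> R.

(* An allocation is the set of accepted bids {k | x_k = 1}. *)
Definition feasible_with (c' : 'I_J -> nat) (x : {set 'I_K}) : bool :=
  [forall j, (\sum_(k in x) a k j <= c' j)%N] &&
  [forall i, (#|[set k in x | owner k == i]| <= 1)%N].

Definition feasible (x : {set 'I_K}) : bool := feasible_with c x.

Definition value (x : {set 'I_K}) : R := \sum_(k in x) b k.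

Definition w (C : {set 'I_I}) (c' : 'I_J -> nat) : R :=
  \big[Num.max/0]_(x : {set 'I_K} | feasible_with c' x &&
                     [forall k in x, owner k \in C]) value x.

Definition efficient (xs : {set 'I_K}) : Prop :=
  feasible xs /\ forall x, feasible x -> value x <= value xs.

Definition has_accepted (xs : {set 'I_K}) (i : 'I_I) : bool :=
  [exists k in xs, owner k == i].

Definition acc_bundle (xs : {set 'I_K}) (i : 'I_I) (j : 'I_J) : nat :=
  \sum_(k in xs | owner k == i) a k j.
Definition acc_amount (xs : {set 'I_K}) (i : 'I_I) : R :=
  \sum_(k in xs | owner k == i) b k.

Definition price (p : 'I_J -> R) (bun : 'I_J -> nat) : R :=
  \sum_j p j * (bun j)%:R.

Definition usage (x : {set 'I_K}) (j : 'I_J) : nat := \sum_(k in x) a k j.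

Definition core_selecting (xs : {set 'I_K}) (rho : 'I_I -> R) : Prop :=
  (forall i, ~~ has_accepted xs i -> rho i = 0) /\
  (forall i, rho i <= acc_amount xs i) /\
  (forall C : {set 'I_I},
      \sum_(i in C) (acc_amount xs i - rho i) + \sum_i rho i >= w C c).

Definition surplus (xs : {set 'I_K}) (p : 'I_J -> R) (i : 'I_I) : R :=
  acc_amount xs i - price p (acc_bundle xs i).

Definition walrasian (xs : {set 'I_K}) (p : 'I_J -> R) : Prop :=
  efficient xs /\
  (forall j, 0 <= p j) /\
  (forall i, 0 <= surplus xs p i) /\
  (forall k, price p (a k) + surplus xs p (owner k) >= b k) /\
  (forall j, (usage xs j < c j)%N -> p j = 0).

Definition pme_witness (xs : {set 'I_K}) (p : 'I_J -> R) (i : 'I_I) : Prop :=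
  exists x : {set 'I_K}, feasible x /\
    (forall k, k \in x -> owner k != i) /\
    (forall k, k \in x -> price p (a k) <= b k) /\
    price p (usage x) = price p (usage xs).

Definition price_match (xs : {set 'I_K}) (p : 'I_J -> R) : Prop :=
  walrasian xs p /\ forall i, pme_witness xs p i.

End Auction.

(* Main.v *)
Require Import Defs.
From HB Require Import structures.
From mathcomp Require Import all_boot all_order all_algebra.
From mathcomp Require Import lra.
Import Order.TTheory GRing.Theory Num.Theory.
Local Open Scope ring_scope.

Lemma uniq_owner {J I K : nat} {owner : 'I_K -> 'I_I} {a : 'I_K -> 'I_J -> nat}
  {c' : 'I_J -> nat} {x : {set 'I_K}} {k k'} :
  feasible_with owner a c' x -> k \in x -> k' \in x -> owner k' = owner k -> k' = k.
Proof.
move=> /andP[_ /forallP /(_ (owner k)) H] kx k'x eo.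
move/card_le1_eqP: H => H.
by apply: H; rewrite inE ?kx ?k'x ?eo eqxx.
Qed.

Lemma sum_owner (V : nmodType) (J I K : nat) (owner : 'I_K -> 'I_I) (a : 'I_K -> 'I_J -> nat)
  (c' : 'I_J -> nat) (x : {set 'I_K}) k (F : 'I_K -> V) :
  feasible_with owner a c' x -> k \in x ->
  \sum_(k' in x | owner k' == owner k) F k' = F k.
Proof.
move=> fx kx; rewrite (bigD1 k) ?kx ?eqxx //= big1 ?addr0 // => k' /andP[/andP[k'x /eqP eo] nk].
by rewrite (uniq_owner fx kx k'x eo) eqxx in nk.
Qed.

Lemma sum_owner_nat (J I K : nat) (owner : 'I_K -> 'I_I) (a : 'I_K -> 'I_J -> nat)
  (c' : 'I_J -> nat) (x : {set 'I_K}) k (F : 'I_K -> nat) :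
  feasible_with owner a c' x -> k \in x ->
  (\sum_(k' in x | owner k' == owner k) F k')%N = F k.
Proof. exact: (@sum_owner nat). Qed.

Lemma price_sum (R : realFieldType) (J K : nat) (a : 'I_K -> 'I_J -> nat) (p : 'I_J -> R) (x : {set 'I_K}) :
  \sum_(k in x) price p (a k) = price p (usage a x).
Proof.
rewrite /price /usage exchange_big /=; apply: eq_bigr => j _.
by rewrite natr_sum mulr_sumr.
Qed.

Lemma price_acc (R : realFieldType) (J I K : nat) (owner : 'I_K -> 'I_I) (a : 'I_K -> 'I_J -> nat)
   (p : 'I_J -> R) (x : {set 'I_K}) :
  \sum_i price p (acc_bundle owner a x i) = price p (usage a x).
Proof.
rewrite /price exchange_big /=; apply: eq_bigr => j _.
rewrite -mulr_sumr -natr_sum; congr (_ * _%:R).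
by rewrite /usage (partition_big owner xpredT).
Qed.

Lemma key (R : realFieldType) (J I K : nat)
  (c : 'I_J -> nat) (owner : 'I_K -> 'I_I) (a : 'I_K -> 'I_J -> nat) (b : 'I_K -> R)
  (xs : {set 'I_K}) (p : 'I_J -> R) (C : {set 'I_I}) (x : {set 'I_K}) :
  walrasian c owner a b xs p -> feasible_with owner a c x ->
  (forall k, k \in x -> owner k \in C) ->
  let s := surplus owner a b xs p in
  let T := \sum_(k in x) (price p (a k) + s (owner k) - b k) in
  [/\ 0 <= T, \sum_(k in x) s (owner k) <= \sum_(i in C) s i,
      price p (usage a x) <= price p (usage a xs) &
      value b x = price p (usage a x) + \sum_(k in x) s (owner k) - T].
Proof.
move=> [[fxs _] [p0 [s0 [bid pz]]]] fx hC s T; split.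
- by apply: sumr_ge0 => k _; rewrite subr_ge0 bid.
- rewrite (partition_big owner (mem C)) //=; apply: ler_sum => i iC.
  rewrite (eq_bigr (fun _ => s i)); last by move=> k /andP[_ /eqP->].
  rewrite (eq_bigl (mem [set k in x | owner k == i])); last by move=> k; rewrite !inE.
  rewrite sumr_const.
  move: fx => /andP[_ /forallP /(_ i)].
  case: #|_| => [|[|//]] _; first by rewrite mulr0n s0.
  by rewrite mulr1n.
- apply: ler_sum => j _.
  have [lt|ge] := ltnP (usage a xs j) (c j); first by rewrite pz // !mul0r.
  apply: ler_wpM2l => //; rewrite ler_nat; apply: leq_trans ge.
  by move: fx => /andP[/forallP /(_ j) + _].
- rewrite /T /value; clearbody s; rewrite sumrB big_split /= price_sum.
  lra.
Qed.
Arguments key {R J I K c owner a b xs p C x}.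

Lemma key_le (R : realFieldType) (J I K : nat)
  (c : 'I_J -> nat) (owner : 'I_K -> 'I_I) (a : 'I_K -> 'I_J -> nat) (b : 'I_K -> R)
  (xs : {set 'I_K}) (p : 'I_J -> R) (C : {set 'I_I}) (x : {set 'I_K}) :
  walrasian c owner a b xs p -> feasible_with owner a c x ->
  (forall k, k \in x -> owner k \in C) ->
  value b x <= \sum_(i in C) surplus owner a b xs p i + price p (usage a xs).
Proof.
move=> W fx hC; have [] := key W fx hC => T0 H1 H2 ->; lra.
Qed.

Lemma key_lt (R : realFieldType) (J I K : nat)
  (c : 'I_J -> nat) (owner : 'I_K -> 'I_I) (a : 'I_K -> 'I_J -> nat) (b : 'I_K -> R)
  (xs : {set 'I_K}) (p : 'I_J -> R) (ibar : 'I_I) (C : {set 'I_I}) (x : {set 'I_K}) :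
  walrasian c owner a b xs p -> ~ pme_witness c owner a b xs p ibar ->
  ibar \notin C -> feasible_with owner a c x ->
  (forall k, k \in x -> owner k \in C) ->
  value b x < \sum_(i in C) surplus owner a b xs p i + price p (usage a xs).
Proof.
move=> W npme niC fx hC; have [] := key W fx hC => T0 H1 H2 Hv.
rewrite ltNge; apply/negP => H.
have T00 : \sum_(k in x) (price p (a k) + surplus owner a b xs p (owner k) - b k) = 0 by lra.
have Peq : price p (usage a x) = price p (usage a xs) by lra.
apply: npme; exists x; split => //; split.
  by move=> k kx; apply: contraNneq niC => <-; exact: hC.
split => // k kx.
have nn : forall k', k' \in x -> 0 <= price p (a k') + surplus owner a b xs p (owner k') - b k'.
  by move=> k' _; move: W => [_ [_ [_ [bid _]]]]; rewrite subr_ge0 bid.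
have := psumr_eq0P nn T00 kx.
move: W => [_ [_ [s0 _]]]; have := s0 (owner k); lra.
Qed.
Arguments sum_owner {V J I K owner a c' x k F}.
Arguments sum_owner_nat {J I K owner a c' x k F}.
Arguments key_le {R J I K c owner a b xs p C x}.
Arguments key_lt {R J I K c owner a b xs p ibar C x}.

Lemma feas0 (J I K : nat) (owner : 'I_K -> 'I_I) (a : 'I_K -> 'I_J -> nat) (c' : 'I_J -> nat) :
  feasible_with owner a c' set0.
Proof.
apply/andP; split; apply/forallP => i; first by rewrite big_set0.
have -> : [set k in set0 | owner k == i] = set0 by apply/setP => k; rewrite !inE.
by rewrite cards0.
Qed.

Lemma w_le (R : realFieldType) (J I K : nat)
  (c : 'I_J -> nat) (owner : 'I_K -> 'I_I) (a : 'I_K -> 'I_J -> nat) (b : 'I_K -> R)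
  (xs : {set 'I_K}) (p : 'I_J -> R) (C : {set 'I_I}) :
  walrasian c owner a b xs p ->
  w owner a b C c <= \sum_(i in C) surplus owner a b xs p i + price p (usage a xs).
Proof.
move=> W; rewrite /w; apply: (big_ind (fun v => v <= _)).
- have h0 : forall k, k \in (set0 : {set 'I_K}) -> owner k \in C by move=> k; rewrite inE.
  have := key_le (x := set0) (C := C) W (feas0 _ _ _ _ _ _) h0.
  by rewrite /value big_set0.
- by move=> u v hu hv; rewrite ge_max hu hv.
- move=> x /andP[fx /forallP hC]; apply: key_le W fx _ => k kx.
  exact: (implyP (hC k)).
Qed.

Lemma w_lt (R : realFieldType) (J I K : nat)
  (c : 'I_J -> nat) (owner : 'I_K -> 'I_I) (a : 'I_K -> 'I_J -> nat) (b : 'I_K -> R)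
  (xs : {set 'I_K}) (p : 'I_J -> R) (ibar : 'I_I) (C : {set 'I_I}) :
  walrasian c owner a b xs p -> ~ pme_witness c owner a b xs p ibar -> ibar \notin C ->
  w owner a b C c < \sum_(i in C) surplus owner a b xs p i + price p (usage a xs).
Proof.
move=> W npme niC; rewrite /w; apply: (big_ind (fun v => v < _)).
- have h0 : forall k, k \in (set0 : {set 'I_K}) -> owner k \in C by move=> k; rewrite inE.
  have := key_lt (x := set0) (C := C) W npme niC (feas0 _ _ _ _ _ _) h0.
  by rewrite /value big_set0.
- by move=> u v hu hv; rewrite gt_max hu hv.
- move=> x /andP[fx /forallP hC]; apply: key_lt W npme niC fx _ => k kx.
  exact: (implyP (hC k)).
Qed.

Arguments w_le {R J I K c owner a b xs p} C.
Arguments w_lt {R J I K c owner a b xs p ibar C}.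

Theorem theorem2 (R : realFieldType) (J I K : nat)
  (c : 'I_J -> nat) (owner : 'I_K -> 'I_I) (a : 'I_K -> 'I_J -> nat) (b : 'I_K -> R)
  (hc : forall j, (1 <= c j)%N)
  (ha : forall k j, (a k j <= c j)%N)
  (hb : forall k, 0 <= b k)
  (xs : {set 'I_K}) (p : 'I_J -> R) (ibar : 'I_I) :
  walrasian c owner a b xs p ->
  ~ pme_witness c owner a b xs p ibar ->
  exists eps : R, 0 < eps /\
    (let rho := fun i : 'I_I =>
        if i == ibar then price p (acc_bundle owner a xs i) - eps
        else price p (acc_bundle owner a xs i) in
     core_selecting c owner a b xs rho /\
     \sum_i rho i < \sum_i price p (acc_bundle owner a xs i)).
Proof.
move=> W npme.
have [[fxs _] [p0 [s0 [bid pz]]]] := W.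
set s := surplus owner a b xs p.
set P := price p (usage a xs).
pose D := fun C : {set 'I_I} => \sum_(i in C) s i + P - w owner a b C c.
have Dgt : forall C : {set 'I_I}, ibar \notin C -> 0 < D C.
  by move=> C iC; rewrite /D subr_gt0; exact: (w_lt W npme iC).
pose eps := \big[Num.min/D set0]_(C : {set 'I_I} | ibar \notin C) D C.
have eps0 : 0 < eps.
  apply: (big_ind (fun v => 0 < v)); first by apply: Dgt; rewrite inE.
    by move=> u v hu hv; rewrite lt_min hu hv.
  exact: Dgt.
have epsle : forall C : {set 'I_I}, ibar \notin C -> eps <= D C.
  by move=> C iC; rewrite /eps (bigD1 C) //= ge_min lexx.
have hacc : has_accepted owner xs ibar.
  case: (boolP (has_accepted owner xs ibar)) => // hn; exfalso; apply: npme; exists xs; split => //; split.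
    move=> k kx; apply/negP => /eqP ok; apply: (negP hn); apply/existsP; exists k.
    by rewrite kx ok eqxx.
  split => // k kx.
  have := s0 (owner k); rewrite /surplus /acc_amount (sum_owner fxs kx).
  have -> : price p (acc_bundle owner a xs (owner k)) = price p (a k).
    by rewrite /price; apply: eq_bigr => j _; rewrite /acc_bundle (sum_owner_nat fxs kx).
  by rewrite subr_ge0.
exists eps; split => //.
move=> rho.
have srho : \sum_i rho i = \sum_i price p (acc_bundle owner a xs i) - eps.
  rewrite (bigD1 ibar) //= [in RHS](bigD1 ibar) //= /rho eqxx.
  have -> : \sum_(i | i != ibar) (if i == ibar then price p (acc_bundle owner a xs i) - eps
        else price p (acc_bundle owner a xs i)) =
      \sum_(i | i != ibar) price p (acc_bundle owner a xs i).
    by apply: eq_bigr => i /negbTE ->.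
  lra.
split; last by rewrite srho; lra.
split; [|split].
- move=> i hi; rewrite /rho; case: eqP => [e|_]; first by rewrite e hacc in hi.
  rewrite /price big1 // => j _.
  have -> : acc_bundle owner a xs i j = 0%N.
    rewrite /acc_bundle big1 // => k /andP[kx /eqP ok]; exfalso.
    by apply: (negP hi); apply/existsP; exists k; rewrite kx ok eqxx.
  by rewrite mulr0.
- move=> i; have := s0 i; rewrite /surplus /rho; case: ifP => _; lra.
- move=> C; rewrite srho price_acc -/P.
  have e : forall i, acc_amount owner b xs i - rho i = s i + (if i == ibar then eps else 0).
    by move=> i; rewrite /rho /s /surplus; case: ifP => _; lra.
  rewrite (eq_bigr _ (fun i _ => e i)) big_split /=.
  case: (boolP (ibar \in C)) => iC.
  + have z : \sum_(i in C | i != ibar) (if i == ibar then eps else 0) = 0.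
      by apply: big1 => i /andP[_ /negbTE ->].
    rewrite [\sum_(i in C) (if _ then _ else _)](bigD1 ibar) //= eqxx z addr0.
    have := w_le C W; rewrite -/s -/P; lra.
  + rewrite [\sum_(i in C) (if _ then _ else _)]big1; last first.
      by move=> i iC'; case: eqP => // ei; move: iC; rewrite -ei iC'.
    have := epsle C iC; rewrite /D; lra.
Qed.
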